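(* Let $b\ge2$ be an integer. Then for every positive integer $n$, \[2\sum_{m=1}^nH(n,m)b^m<\sum_{m=1}^{n+1}H(n+1,m)b^m.\]
   Context: A composition of a positive integer $n$ is an ordered tuple $(c_1,\ldots,c_m)$ of positive integers summing to $n$ ($m$ parts); it is headstrong if $c_1\ge c_i$ for all $i$. $H(n,m)$ is the number of headstrong compositions of $n$ with exactly $m$ parts. *)

(* Defs.v *)
From mathcomp Require Import all_boot.
Set Implicit Arguments. Unset Strict Implicit. Unset Printing Implicit Defensive.

Definition composition (n m : nat) (c : seq nat) : bool :=
  [&& size c == m, all (fun x => 0 < x) c & sumn c == n].

Definition headstrong (c : seq nat) : bool :=
  all (fun x => x <= head 0 c) c.

(* H(n,m): number of headstrong compositions of n with exactly m parts.
   Every part lies in [1, n], so it suffices to range over m-tuples of 'I_n.+1. *)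
Definition H (n m : nat) : nat :=
  #|[set t : m.-tuple 'I_n.+1 |
      composition n m (map (@nat_of_ord _) t) && headstrong (map (@nat_of_ord _) t)]|.

(* Main.v *)
Require Import Defs.
From mathcomp Require Import all_boot.

Lemma H_shift (n m : nat) (hm : 0 < m) : H n m <= H n.+1 m.+1.
Proof.
rewrite /H.
pose f (t : m.-tuple 'I_n.+1) : m.+1.-tuple 'I_n.+2 :=
  rcons_tuple (map_tuple (widen_ord (leqnSn n.+1)) t) (inord 1).
have fE t : map (@nat_of_ord _) (f t) = rcons (map (@nat_of_ord _) t) 1.
  rewrite /= map_rcons -map_comp inordK //.
have finj : injective f.
  move=> t1 t2 /(congr1 (fun t : m.+1.-tuple _ => map (@nat_of_ord _) t)).
  rewrite !fE => /eqP; rewrite eqseq_rcons andbT => /eqP E.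
  apply: val_inj; apply: (inj_map (@ord_inj _)); exact: E.
rewrite -(card_imset _ finj); apply: subset_leq_card.
apply/subsetP => _ /imsetP [t + ->]; rewrite !inE fE.
case/andP => /and3P [/eqP hs ha /eqP hsum] hh.
apply/andP; split.
  apply/and3P; split.
  - by rewrite size_rcons hs.
  - by rewrite all_rcons ha.
  - by rewrite sumn_rcons hsum addn1.
move: hh; rewrite /headstrong all_rcons.
have hne : map (@nat_of_ord _) t <> [::].
  by move=> E; move: hs; rewrite E => hs; move: hm; rewrite -hs.
case E: (map (@nat_of_ord _) t) ha => [|x s] //= ha hh.
by rewrite hh andbT; case/andP: ha.
Qed.

Lemma H_one (n : nat) : 0 < H n.+1 1.
Proof.
rewrite /H card_gt0; apply/set0Pn.
exists [tuple (@ord_max n.+1)]; rewrite inE /= /composition /headstrong /=.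
by rewrite !leqnn addn0 eqxx.
Qed.

Theorem mainTheorem17 (b : nat) (hb : 2 <= b) (n : nat) (hn : 0 < n) :
  2 * (\sum_(1 <= m < n.+1) H n m * b ^ m) < \sum_(1 <= m < n.+2) H n.+1 m * b ^ m.
Proof.
rewrite [X in _ < X]big_ltn // [X in _ < _ + X]big_add1 /=.
have h1 : b <= H n.+1 1 * b ^ 1.
  by rewrite expn1 leq_pmull // H_one.
have h2 : 2 * (\sum_(1 <= m < n.+1) H n m * b ^ m)
          <= \sum_(1 <= i < n.+1) H n.+1 i.+1 * b ^ i.+1.
  apply: (@leq_trans (b * (\sum_(1 <= m < n.+1) H n m * b ^ m))).
    by rewrite leq_mul2r hb orbT.
  rewrite big_distrr /=; rewrite big_nat [X in _ <= X]big_nat; apply: leq_sum => i /andP [hi _].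
  by rewrite expnS mulnCA leq_mul2r H_shift ?orbT.
apply: (leq_trans _ (leq_add h1 h2)).
by rewrite addnC -addn1 leq_add2l (leq_trans _ hb).
Qed.
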